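(* Let $\alpha$ be irrational with convergents $p_k/q_k$. For integers $k \ge 1$ and $0 \le M <q_k$ define \[ B_{k,M}(x)= \log \frac{P_M (\alpha, (-1)^k x/q_k)}{P_M (p_k/q_k, (-1)^k x/q_k)} - \sum_{n=1}^M \sin (\pi n \| q_k \alpha \| /q_k ) \cot \left( \pi \frac{n (-1)^k p_k+x}{q_k} \right) . \] Then \[ \log P_{q_k}(\alpha, (-1)^k x/q_k) = \log \left( |2 \sin (\pi (\| q_k \alpha \| + x/q_k))| \frac{|\sin (\pi x)|}{|\sin (\pi x/q_k)|} \right) + V_k (x) + B_{k,q_k-1}(x) , \] with the convention $|\sin (\pi x)| / |\sin (\pi x /q_k)| =q_k$ when $x/q_k \in \mathbb{Z}$.
   Context: $P_N(\beta,x)=\prod_{n=1}^N|2\sin(\pi(n\beta+x))|$. $p_k/q_k=[a_0;a_1,\dots,a_k]$ are the convergents of $\alpha=[a_0;a_1,\dots]$; $\|y\|$ is distance to nearest integer. $V_k(x)=\sum_{n=1}^{q_k-1} \sin (\pi n \| q_k \alpha \| /q_k) \cot \left( \pi \frac{n(-1)^k p_k+x}{q_k} \right)$. *)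

(* Defs.v *)
From Stdlib Require Import Reals ZArith ClassicalEpsilon.
Open Scope R_scope.

Fixpoint sum1 (N : nat) (f : nat -> R) : R :=
  match N with O => 0 | S m => sum1 m f + f (S m) end.
Fixpoint prod1 (N : nat) (f : nat -> R) : R :=
  match N with O => 1 | S m => prod1 m f * f (S m) end.

Definition P (N : nat) (beta x : R) : R :=
  prod1 N (fun n => Rabs (2 * sin (PI * (INR n * beta + x)))).

Definition cot (t : R) : R := cos t / sin t.

Definition dnint (y : R) : R := Rmin (frac_part y) (1 - frac_part y).

Definition irrational (a : R) : Prop :=
  forall m n : Z, n <> 0%Z -> a <> IZR m / IZR n.

(* regular continued fraction: complete quotients alpha_n and digits a_n *)
Fixpoint cf_rem (a : R) (n : nat) : R :=
  match n with O => a | S m => / frac_part (cf_rem a m) end.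
Definition cf_digit (a : R) (n : nat) : Z := Int_part (cf_rem a n).

(* ((p_n, q_n), (p_{n-1}, q_{n-1})), with p_{-1} = 1, q_{-1} = 0 *)
Fixpoint cf_pq (a : R) (n : nat) : (Z * Z) * (Z * Z) :=
  match n with
  | O => ((cf_digit a 0, 1%Z), (1%Z, 0%Z))
  | S m =>
      let '((p, q), (p', q')) := cf_pq a m in
      let d := cf_digit a (S m) in
      (((d * p + p')%Z, (d * q + q')%Z), (p, q))
  end.
Definition cf_p (a : R) (k : nat) : Z := fst (fst (cf_pq a k)).
Definition cf_q (a : R) (k : nat) : Z := snd (fst (cf_pq a k)).

Definition V (a : R) (k : nat) (x : R) : R :=
  let q := cf_q a k in let p := cf_p a k in
  sum1 (Z.to_nat q - 1)
    (fun n => sin (PI * INR n * dnint (IZR q * a) / IZR q)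
              * cot (PI * (INR n * (-1) ^ k * IZR p + x) / IZR q)).

Definition B (a : R) (k M : nat) (x : R) : R :=
  let q := cf_q a k in let p := cf_p a k in
  let y := (-1) ^ k * x / IZR q in
  ln (P M a y / P M (IZR p / IZR q) y)
  - sum1 M (fun n => sin (PI * INR n * dnint (IZR q * a) / IZR q)
                     * cot (PI * (INR n * (-1) ^ k * IZR p + x) / IZR q)).

Definition sin_ratio (q x : R) : R :=
  match excluded_middle_informative (exists z : Z, x / q = IZR z) with
  | left _ => q
  | right _ => Rabs (sin (PI * x)) / Rabs (sin (PI * x / q))
  end.

(* Main.v *)
From Stdlib Require Import Reals Lra ZArith Psatz ClassicalEpsilon.
Require Import Defs.

Module MC.
From mathcomp Require Import all_boot all_order all_algebra.
From mathcomp Require Import complex Rstruct.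
Import Order.TTheory GRing.Theory Num.Theory.
Delimit Scope ring_scope with ring.

Section MC0.
Local Open Scope ring_scope.

Lemma prod_roots (F : fieldType) (n : nat) (z w : F) :
  n.-primitive_root z -> \sum_(i < n) w ^+ i = \prod_(1 <= i < n) (w - z ^+ i).
Proof.
move=> pz; have n0 := prim_order_gt0 pz.
have H := factor_Xn_sub_1 pz.
rewrite big_ltn // expr0 subrX1 in H.
rewrite polyC1 in H.
have nz : ('X - 1 : {poly F}) != 0 by rewrite -polyC1 polyXsubC_eq0.
have H2 := mulfI nz H.
have := congr1 (fun p => p.[w]) H2 => /=.
rewrite horner_sum horner_prod.
move=> E.
rewrite (eq_bigr (fun i : 'I_n => ('X^i : {poly F}).[w])); last by move=> i _; rewrite hornerXn.
rewrite -E. apply: eq_bigr => i _. by rewrite hornerXsubC.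
Qed.

Definition expi (t : R) : R[i] := Complex (cos t) (sin t).

Lemma expiD s t : expi s * expi t = expi (s + t).
Proof.
rewrite /expi /= sinD cosD; congr Complex; by rewrite addrC.
Qed.

Lemma expi0 : expi 0 = 1.
Proof. by rewrite /expi cos_0 sin_0. Qed.

Lemma expiX t n : expi t ^+ n = expi (n%:R * t).
Proof.
elim: n => [|n IH].
  by rewrite expr0 -expi0; congr expi; rewrite /= Rmult_0_l.
rewrite exprS IH expiD; congr expi.
rewrite (mulrS 1 n) !RmultE !RplusE mulrDl mul1r. done.
Qed.
End MC0.

Open Scope R_scope.

Lemma trig_id (s t : R) : (cos s - cos t)^2 + (sin s - sin t)^2 = (2 * sin ((s - t)/2))^2.
Proof.
set u := (s-t)/2. have -> : s = t + 2*u by rewrite /u; field.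
rewrite sin_plus cos_plus sin_2a cos_2a_sin.
have Ht := sin2_cos2 t. have Hu := sin2_cos2 u. rewrite /Rsqr in Ht Hu.
set a := sin t. set b := cos t. set c := sin u. set d := cos u.
rewrite -/a -/b -/c -/d in Ht Hu.
have -> : ((b * (1 - 2 * c * c) - a * (2 * c * d) - b) ^ 2 + (a * (1 - 2 * c * c) + b * (2 * c * d) - a) ^ 2)
 = ((a*a+b*b) * (4*c*c) * (c*c+d*d)) by ring.
rewrite Ht Hu. ring.
Qed.

Lemma expiXR t n : (expi t ^+ n)%ring = expi (INR n * t).
Proof. by rewrite expiX INRE. Qed.

Lemma normc_expiB s t : Normc.normc (expi s - expi t)%ring = Rabs (2 * sin ((s - t)/2)).
Proof.
rewrite /expi /= RabsE -sqrtr_sqr. congr Num.sqrt.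
have := trig_id s t. rewrite !RpowE. done.
Qed.

Lemma normc_expi1 t : Normc.normc (expi t - 1)%ring = Rabs (2 * sin (t/2)).
Proof. by rewrite -expi0 normc_expiB Rminus_0_r. Qed.

Definition ang (p : Z) (Q : nat) : R := 2 * PI * IZR p / INR Q.

Lemma Rabs2_0 s : Rabs (2 * s) = 0 -> s = 0.
Proof. move=> H. have := Rabs_pos_lt (2 * s). case: (Req_dec s 0) => // H1 H2. 
have : 2 * s <> 0 by apply: Rmult_integral_contrapositive_currified => //; lra.
move/H2. lra. Qed.

Lemma prim_z (Q : nat) (p : Z) : (0 < Q)%N ->
  (forall i, (0 < i < Q)%N -> forall m : Z, INR i * IZR p <> IZR m * INR Q) ->
  (Q.-primitive_root (expi (ang p Q)))%ring.
Proof.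
move=> Q0 Hc; apply/andP; split => //; apply/forallP => i; apply/eqP.
rewrite unity_rootE expiXR.
have QR : INR Q <> 0 by apply: not_0_INR; case: Q Q0 {Hc i}.
have [EQ|NE] := eqVneq i.+1 Q.
  rewrite EQ -subr_eq0; apply/eqP; apply: Normc.eq0_normc.
  rewrite normc_expi1.
  have -> : INR Q * ang p Q / 2 = IZR p * PI by rewrite /ang; field.
  by rewrite sin_eq_0_1 ?Rmult_0_r ?Rabs_R0 //; exists p.
apply/negbTE/negP => /eqP E.
have := Normc.normc0 R; rewrite -(subrr (1%ring : R[i])) -{1}E normc_expi1 => /Rabs2_0 H1.
case: (sin_eq_0_0 _ H1) => m Hm.
apply: (Hc i.+1 _ m).
  by rewrite /= ltn_neqAle NE ltn_ord.
move: Hm; rewrite /ang => Hm.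
have PI0 := PI_neq0.
have : INR i.+1 * IZR p * PI = IZR m * INR Q * PI.
  rewrite -[LHS]Rmult_1_r -(Rinv_r (INR Q)) //.
  have -> : INR i.+1 * IZR p * PI * (INR Q * / INR Q) = INR i.+1 * (2 * PI * IZR p / INR Q) / 2 * INR Q by field.
  rewrite Hm; field.
by move/(Rmult_eq_reg_r _ _ _) => /(_ PI0).
Qed.


Lemma prod1E N f : prod1 N f = (\prod_(1 <= n < N.+1) f n)%ring.
Proof.
elim: N => [|N IH] /=; first by rewrite big_geq.
by rewrite IH (big_nat_recr N.+1) //.
Qed.

Lemma Rabs2sin_neg u : Rabs (2 * sin (- u)) = Rabs (2 * sin u).
Proof. by rewrite sin_neg -Ropp_mult_distr_r Rabs_Ropp. Qed.

Lemma trig_prod (Q : nat) (p : Z) (y : R) : (0 < Q)%N ->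
  (forall i, (0 < i < Q)%N -> forall m : Z, INR i * IZR p <> IZR m * INR Q) ->
  prod1 (Q - 1) (fun n => Rabs (2 * sin (PI * (INR n * (IZR p / INR Q) + y))))
  = Normc.normc (\sum_(i < Q) (expi (- 2 * PI * y)) ^+ i)%ring.
Proof.
move=> Q0 Hc.
rewrite (prod_roots _ _ _ _ (prim_z _ _ Q0 Hc)) prod1E.
rewrite (big_morph (@Normc.normc R) (@Normc.normcM R) (Normc.normc1 R)).
have -> : (Q - 1)%N.+1 = Q by rewrite subn1 prednK.
apply: eq_bigr => i _.
rewrite expiXR normc_expiB.
have QR : INR Q <> 0 by apply: not_0_INR; case: Q Q0 {Hc}.
have -> : (-2 * PI * y - INR i * ang p Q) / 2 = - (PI * (INR i * (IZR p / INR Q) + y)).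
  by rewrite /ang; field.
by rewrite Rabs2sin_neg.
Qed.

Lemma sum_case1 (Q : nat) y : sin (PI * y) = 0 ->
  Normc.normc (\sum_(i < Q) (expi (- 2 * PI * y)) ^+ i)%ring = INR Q.
Proof.
move=> H.
have W : expi (-2*PI*y) = 1%ring.
  apply/eqP; rewrite -subr_eq0; apply/eqP; apply: Normc.eq0_normc.
  rewrite normc_expi1. have -> : -2*PI*y/2 = -(PI*y) by field.
  by rewrite Rabs2sin_neg H Rmult_0_r Rabs_R0.
rewrite W. under eq_bigr do rewrite expr1n. rewrite sumr_const card_ord.
rewrite -[X in Normc.normc X](rmorph_nat (real_complex R)).
by rewrite /Normc.normc /= expr0n addr0 sqrtr_sqr ger0_norm ?ler0n // INRE.
Qed.

Lemma sum_case2 (Q : nat) y : sin (PI * y) <> 0 ->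
  Normc.normc (\sum_(i < Q) (expi (- 2 * PI * y)) ^+ i)%ring
  = Rabs (sin (PI * (INR Q * y))) / Rabs (sin (PI * y)).
Proof.
move=> H.
have E := subrX1 (expi (-2*PI*y)) Q.
have := congr1 (@Normc.normc R) E.
rewrite Normc.normcM expiXR !normc_expi1.
have -> : INR Q * (-2*PI*y)/2 = -(PI*(INR Q*y)) by field.
have -> : -2*PI*y/2 = -(PI*y) by field.
rewrite !Rabs2sin_neg !Rabs_mult (Rabs_pos_eq 2); last lra.
rewrite -RmultE.
set N := Normc.normc _.
move=> H'.
have Ha : Rabs (sin (PI * y)) <> 0 by apply: Rabs_no_R0.
have -> : Rabs (sin (PI * (INR Q * y))) = Rabs (sin (PI * y)) * N by lra.
by rewrite /Rdiv Rmult_comm -Rmult_assoc Rinv_l // Rmult_1_l.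
Qed.

Lemma trig_final (Q : nat) (p : Z) (y : R) : (0 < Q)%coq_nat ->
  (forall i, (0 < i)%coq_nat -> (i < Q)%coq_nat -> forall m : Z, INR i * IZR p <> IZR m * INR Q) ->
  (sin (PI * y) = 0 -> prod1 (Nat.sub Q 1) (fun n => Rabs (2 * sin (PI * (INR n * (IZR p / INR Q) + y)))) = INR Q) /\
  (sin (PI * y) <> 0 -> prod1 (Nat.sub Q 1) (fun n => Rabs (2 * sin (PI * (INR n * (IZR p / INR Q) + y))))
      = Rabs (sin (PI * (INR Q * y))) / Rabs (sin (PI * y))).
Proof.
move=> /ssrnat.ltP Q0 Hc.
have Hc' : forall i, (0 < i < Q)%N -> forall m : Z, INR i * IZR p <> IZR m * INR Q.
  by move=> i /andP [/ssrnat.ltP h1 /ssrnat.ltP h2]; exact: Hc.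
rewrite (trig_prod _ _ y Q0 Hc').
split => H; [exact: sum_case1 | exact: sum_case2].
Qed.
End MC.

From Corelib Require Import ssreflect.
Open Scope R_scope.

Lemma irr_frac r : irrational r -> frac_part r <> 0.
Proof.
move=> Hr Hf; refine (Hr (Int_part r) 1%Z _ _); first by [].
rewrite /Rdiv Rinv_1 Rmult_1_r. move: Hf; rewrite /frac_part; lra.
Qed.

Lemma irr_step r : irrational r -> irrational (/ frac_part r).
Proof.
move=> Hr m n Hn E.
have Hf := irr_frac _ Hr.
have Hm : IZR m <> 0.
  move=> Hm0; move: E; rewrite Hm0 /Rdiv Rmult_0_l; exact: (Rinv_neq_0_compat _ Hf).
have Hm' : m <> 0%Z by move=> H0; apply: Hm; rewrite H0.
have Hf' : frac_part r = IZR n / IZR m.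
  rewrite -(Rinv_inv (frac_part r)) E. field. split => //. exact: not_0_IZR.
refine (Hr (Int_part r * m + n)%Z m Hm' _).
rewrite plus_IZR mult_IZR.
have Er : r = IZR (Int_part r) + frac_part r by rewrite /frac_part; ring.
rewrite {1}Er Hf'. field. done.
Qed.

Lemma rem_irr a n : irrational a -> irrational (cf_rem a n).
Proof. move=> Ha; elim: n => [|n IH] //=; exact: irr_step. Qed.

Lemma rem_gt1 a n : irrational a -> 1 < cf_rem a (S n).
Proof.
move=> Ha /=. have Hf := irr_frac _ (rem_irr _ n Ha).
have [H1 H2] := base_fp (cf_rem a n).
have H3 : 0 < frac_part (cf_rem a n) by lra.
rewrite -Rinv_1. apply: Rinv_lt_contravar => //; lra.
Qed.

Lemma digit_ge1 a n : irrational a -> (1 <= cf_digit a (S n))%Z.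
Proof.
move=> Ha. have H := rem_gt1 _ n Ha. rewrite /cf_digit.
have [H1 H2] := base_Int_part (cf_rem a (S n)).
have : (0 < Int_part (cf_rem a (S n)))%Z by apply: lt_IZR; lra.
lia.
Qed.

Lemma rem_decomp a n : cf_rem a n = IZR (cf_digit a n) + / cf_rem a (S n).
Proof. by rewrite /= Rinv_inv /cf_digit /frac_part; ring. Qed.

Lemma pow_m1 k : (-1)^k = 1 \/ (-1)^k = -1.
Proof. elim: k => [|k [IH|IH]] /=; [left|right|left]; rewrite ?IH; lra. Qed.

Lemma cf_inv a n : irrational a -> exists p q p' q' : Z,
  cf_pq a n = ((p, q), (p', q')) /\
  IZR p * IZR q' - IZR p' * IZR q = - (-1)^n /\
  (1 <= q)%Z /\ (0 <= q')%Z /\ ((1 <= n)%nat -> (1 <= q')%Z) /\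
  a * (IZR q * cf_rem a (S n) + IZR q') = IZR p * cf_rem a (S n) + IZR p'.
Proof.
move=> Ha; elim: n => [|n [p [q [p' [q' [E [Hd [Hq [Hq' [Hq'' Hid]]]]]]]]]].
  have Hr := rem_gt1 _ 0 Ha.
  have E0 : a = IZR (cf_digit a 0) + / cf_rem a 1 := rem_decomp a 0.
  exists (cf_digit a 0), 1%Z, 1%Z, 0%Z.
  split; first done. split; first (simpl; lra). split; first lia. split; first lia.
  split; first (move=> H; lia).
  rewrite {1}E0. field. lra.
set d := cf_digit a (S n).
exists (d * p + p')%Z, (d * q + q')%Z, p, q.
have Hdd : (1 <= d)%Z by apply: digit_ge1.
split; first by rewrite /= E.
split.
  rewrite !plus_IZR !mult_IZR /=. lra.
split; first by nia.
split; first by lia.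
split; first by move=> _; lia.
have Hs := rem_gt1 _ (S n) Ha.
have Hs0 : cf_rem a (S (S n)) <> 0 by lra.
have Er := rem_decomp a (S n).
rewrite Er in Hid.
rewrite !plus_IZR !mult_IZR.
transitivity (cf_rem a (S (S n)) * (a * (IZR q * (IZR d + / cf_rem a (S (S n))) + IZR q'))).
  rewrite /d. field. done.
rewrite Hid /d. field. done.
Qed.

Lemma cf_main a k : irrational a -> (1 <= k)%nat ->
  (1 <= cf_q a k)%Z /\
  (exists u v : Z, (u * cf_p a k + v * cf_q a k = 1)%Z) /\
  exists d, 0 < d < 1/2 /\ IZR (cf_q a k) * a - IZR (cf_p a k) = (-1)^k * d.
Proof.
move=> Ha Hk.
have [p [q [p' [q' [E [Hd [Hq [Hq' [Hq'' Hid]]]]]]]]] := cf_inv a k Ha.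
rewrite /cf_q /cf_p E /=.
have Hq1 := Hq'' Hk.
split; first done.
split.
  case: (pow_m1 k) => Hk1; rewrite Hk1 in Hd.
    have : (p * q' - p' * q)%Z = (-1)%Z by apply: eq_IZR; rewrite minus_IZR !mult_IZR; lra.
    move=> H; exists (- q')%Z, p'; lia.
  have : (p * q' - p' * q)%Z = 1%Z by apply: eq_IZR; rewrite minus_IZR !mult_IZR; lra.
  move=> H; exists q', (- p')%Z; lia.
have Hr := rem_gt1 _ k Ha.
have HqR : 1 <= IZR q by apply: IZR_le.
have Hq'R : 1 <= IZR q' by apply: IZR_le.
set r := cf_rem a (S k) in Hid Hr.
set D := IZR q * r + IZR q' in Hid.
have HD : 2 < D by rewrite /D; nra.
exists (/ D); split.
  split; first by apply: Rinv_0_lt_compat; lra.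
  rewrite /Rdiv Rmult_1_l. apply: Rinv_lt_contravar; lra.
have H1 : (IZR q * a - IZR p) * D = (-1)^k.
  have -> : (IZR q * a - IZR p) * D = IZR q * (a * D) - IZR p * D by ring.
  rewrite Hid /D. lra.
rewrite -H1. field. lra.
Qed.

Lemma dnint_val k p t d : 0 < d < 1/2 -> t - IZR p = (-1)^k * d -> dnint t = d.
Proof.
move=> [H0 H1]; case: (pow_m1 k) => ->; rewrite ?Rmult_1_l => E.
  have Hu : (p + 1)%Z = up t by apply: tech_up; rewrite plus_IZR; lra.
  have Hf : frac_part t = d by rewrite /frac_part /Int_part -Hu minus_IZR plus_IZR; lra.
  rewrite /dnint Hf Rmin_left //; lra.
have Hu : p = up t by apply: tech_up; lra.
have Hf : frac_part t = 1 - d by rewrite /frac_part /Int_part -Hu minus_IZR; lra.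
rewrite /dnint Hf Rmin_right //; lra.
Qed.

Lemma abs_sin_shift m u : Rabs (sin (IZR m * PI + u)) = Rabs (sin u).
Proof.
rewrite sin_plus (sin_eq_0_1 (IZR m * PI)); last by exists m.
rewrite Rmult_0_l Rplus_0_l Rabs_mult.
have H := sin2_cos2 (IZR m * PI). rewrite (sin_eq_0_1 (IZR m * PI)) in H; last by exists m.
rewrite /Rsqr in H.
have Hc : Rabs (cos (IZR m * PI)) = 1.
  have H2 : Rabs (cos (IZR m * PI)) * Rabs (cos (IZR m * PI)) = 1 by rewrite -Rabs_mult; rewrite Rabs_pos_eq; nra.
  have := Rabs_pos (cos (IZR m * PI)). nra.
rewrite Hc; ring.
Qed.

Lemma abs_sin_sign k u : Rabs (sin ((-1)^k * u)) = Rabs (sin u).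
Proof.
case: (pow_m1 k) => ->; first by rewrite Rmult_1_l.
by rewrite -Ropp_mult_distr_l Rmult_1_l sin_neg Rabs_Ropp.
Qed.

Lemma prod1_pos N f : (forall n, (1 <= n <= N)%nat -> 0 < f n) -> 0 < prod1 N f.
Proof.
elim: N => [|N IH] H /=; first lra.
apply: Rmult_lt_0_compat; [apply: IH => n Hn; apply: H; lia | apply: H; lia].
Qed.

Lemma abs2sin_pos u : sin u <> 0 -> 0 < Rabs (2 * sin u).
Proof. move=> H; apply: Rabs_pos_lt; apply: Rmult_integral_contrapositive_currified => //; lra. Qed.

Lemma VB_eq a k x :
  V a k x + B a k (Z.to_nat (cf_q a k) - 1) x =
  ln (P (Z.to_nat (cf_q a k) - 1) a ((-1) ^ k * x / IZR (cf_q a k)) /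
      P (Z.to_nat (cf_q a k) - 1) (IZR (cf_p a k) / IZR (cf_q a k)) ((-1) ^ k * x / IZR (cf_q a k))).
Proof. rewrite /V /B /=. ring. Qed.

Lemma ln_div' u w : 0 < u -> 0 < w -> ln (u / w) = ln u - ln w.
Proof.
move=> Hu Hw; rewrite /Rdiv ln_mult ?ln_Rinv //; last exact: Rinv_0_lt_compat.
Qed.

Lemma P_S n b y : P (S n) b y = P n b y * Rabs (2 * sin (PI * (INR (S n) * b + y))).
Proof. by []. Qed.

Theorem corollary1 (a : R) (k : nat) (x : R) :
  irrational a -> (1 <= k)%nat ->
  (* x is such that all terms are defined (no log 0, no pole of cot) *)
  (forall n : nat, (1 <= n <= Z.to_nat (cf_q a k))%nat ->
     sin (PI * (INR n * a + (-1) ^ k * x / IZR (cf_q a k))) <> 0) ->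
  (forall n : nat, (1 <= n <= Z.to_nat (cf_q a k) - 1)%nat ->
     sin (PI * (INR n * (-1) ^ k * IZR (cf_p a k) + x) / IZR (cf_q a k)) <> 0) ->
  ln (P (Z.to_nat (cf_q a k)) a ((-1) ^ k * x / IZR (cf_q a k)))
  = ln (Rabs (2 * sin (PI * (dnint (IZR (cf_q a k) * a) + x / IZR (cf_q a k))))
        * sin_ratio (IZR (cf_q a k)) x)
    + V a k x + B a k (Z.to_nat (cf_q a k) - 1) x.
Proof.
move=> Ha Hk H1 H2.
rewrite Rplus_assoc VB_eq.
have [Hq [[u [v Huv]] [d [Hd Hqa]]]] := cf_main a k Ha Hk.
set q := cf_q a k in H1 H2 Hq Huv Hqa *.
set p := cf_p a k in H1 H2 Huv Hqa *.
set Q := Z.to_nat q in H1 H2 *.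
set y := (-1) ^ k * x / IZR q in H1 *.
have Q0 : (0 < Q)%nat by rewrite /Q; lia.
have QR : INR Q = IZR q by rewrite /Q INR_IZR_INZ Z2Nat.id //; lia.
have qR0 : IZR q <> 0 by apply: not_0_IZR; lia.
have EQ : Q = S (Q - 1) by lia.
have LHS : P Q a y = P (Q - 1) a y * Rabs (2 * sin (PI * (IZR q * a + y))).
  by rewrite {1}EQ P_S -EQ QR.
have A : Rabs (2 * sin (PI * (IZR q * a + y))) = Rabs (2 * sin (PI * (dnint (IZR q * a) + x / IZR q))).
  rewrite (dnint_val k p (IZR q * a) d Hd Hqa).
  have -> : PI * (IZR q * a + y) = IZR p * PI + (-1)^k * (PI * (d + x / IZR q)).
    rewrite (_ : IZR q * a = IZR p + (-1)^k * d); last by lra.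
    rewrite /y; field; done.
  by rewrite !Rabs_mult abs_sin_shift abs_sin_sign.
have Apos : 0 < Rabs (2 * sin (PI * (IZR q * a + y))).
  apply: abs2sin_pos; rewrite -QR; apply: H1; lia.
have P1pos : 0 < P (Q - 1) a y.
  rewrite /P; apply: prod1_pos => n Hn; apply: abs2sin_pos; apply: H1; lia.
have Hc : forall i, (0 < i)%nat -> (i < Q)%nat -> forall m : Z, INR i * IZR p <> IZR m * INR Q.
  move=> i Hi1 Hi2 m E. rewrite QR in E.
  have Ez : (Z.of_nat i * p = m * q)%Z by apply: eq_IZR; rewrite !mult_IZR -INR_IZR_INZ.
  have E2 : (Z.of_nat i = Z.of_nat i * (u * p + v * q))%Z by rewrite Huv; lia.
  have E3 : (Z.of_nat i = (u * m + Z.of_nat i * v) * q)%Z.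
    rewrite {1}E2. have -> : (Z.of_nat i * (u * p + v * q) = u * (Z.of_nat i * p) + Z.of_nat i * v * q)%Z by ring.
    rewrite Ez; ring.
  have Hiq : (Z.of_nat i < q)%Z by rewrite /Q in Hi2; lia.
  have Hi0 : (0 < Z.of_nat i)%Z by lia.
  move: E3 Hiq Hi0; set t := (u * m + Z.of_nat i * v)%Z; clearbody t; move=> E3 Hiq Hi0.
  case: (Z.le_gt_cases t 0) => Ht; nia.
have [T0 T1] := MC.trig_final Q p y Q0 Hc.
rewrite QR in T0 T1.
have Hxy : x / IZR q = (-1)^k * y by rewrite /y; case: (pow_m1 k) => ->; field.
have P2E : P (Q - 1) (IZR p / IZR q) y = sin_ratio (IZR q) x.
  case: (Req_dec (sin (PI * y)) 0) => Hs.
    rewrite /P T0 //. rewrite /sin_ratio; case: excluded_middle_informative => // Hn.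
    exfalso; apply: Hn.
    have [m Hm] := sin_eq_0_0 _ Hs.
    have Hy : y = IZR m by apply: (Rmult_eq_reg_l PI); [lra | exact: PI_neq0].
    rewrite Hxy Hy; case: (pow_m1 k) => ->; [exists m; ring | exists (- m)%Z; rewrite opp_IZR; ring].
  rewrite /P T1 //. rewrite /sin_ratio; case: excluded_middle_informative => [[z Hz]|_].
    exfalso; apply: Hs.
    have Hy : y = (-1)^k * IZR z by rewrite -Hz Hxy; case: (pow_m1 k) => ->; ring.
    rewrite Hy; case: (pow_m1 k) => ->; apply: sin_eq_0_1; [exists z; ring | exists (- z)%Z; rewrite opp_IZR; ring].
  have -> : PI * (IZR q * y) = (-1)^k * (PI * x) by rewrite /y; field.
  have -> : PI * y = (-1)^k * (PI * x / IZR q) by rewrite /y; field.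
  by rewrite !abs_sin_sign.
have P2pos : 0 < P (Q - 1) (IZR p / IZR q) y.
  rewrite /P; apply: prod1_pos => n Hn; apply: abs2sin_pos.
  have Hn2 := H2 n Hn.
  have -> : PI * (INR n * (IZR p / IZR q) + y) = (-1)^k * (PI * (INR n * (-1) ^ k * IZR p + x) / IZR q).
    rewrite /y; case: (pow_m1 k) => ->; field; done.
  move=> Hz; apply: Hn2.
  have : Rabs (sin ((-1)^k * (PI * (INR n * (-1) ^ k * IZR p + x) / IZR q))) = 0 by rewrite Hz Rabs_R0.
  rewrite abs_sin_sign.
  case: (Req_dec (sin (PI * (INR n * (-1) ^ k * IZR p + x) / IZR q)) 0) => // Hne H0.
  have := Rabs_pos_lt _ Hne; lra.
rewrite LHS A -P2E. rewrite A in Apos.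
rewrite (ln_mult _ _ P1pos Apos) (ln_mult _ _ Apos P2pos) (ln_div' _ _ P1pos P2pos); ring.
Qed.
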